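(* Let $\delta>0$ and let $g:[\ell,r]\to\mathbb{R}$ be a function with $|g(x)+\frac12x^2|\leq\frac14\delta^2$ for all $x\in[\ell,r]$. Let $x_0\in[\ell+3\delta,r-3\delta]$. Let $h_1$ be the concave majorant of $g$ on $[\ell,r]$ and $h_2$ the concave majorant of $g$ on $[x_0-3\delta,x_0+3\delta]$. Then $h_1(x_0)=h_2(x_0)$.
   Context: The concave majorant of $g$ on an interval $I$ is $h(x_0)=\inf\{ax_0+b: ax+b\geq g(x)\text{ for all }x\in I\}$ for $x_0\in I$. *)

(* Defs.v *)
From HB Require Import structures.
From mathcomp Require Import all_boot all_order all_algebra.
From mathcomp Require Import all_classical all_reals.
Set Implicit Arguments. Unset Strict Implicit. Unset Printing Implicit Defensive.
Import Order.TTheory GRing.Theory Num.Theory.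
Local Open Scope classical_set_scope.
Local Open Scope ring_scope.

Definition concave_majorant (R : realType) (I : set R) (g : R -> R) (x0 : R) : R :=
  inf [set y : R | exists a b : R,
         (forall x, I x -> g x <= a * x + b) /\ y = a * x0 + b].

(* Main.v *)
Require Import Defs.
From HB Require Import structures.
From mathcomp Require Import all_boot all_order all_algebra.
From mathcomp Require Import all_classical all_reals.
From mathcomp Require Import ring lra.
Import Order.TTheory GRing.Theory Num.Theory.
Local Open Scope classical_set_scope.
Local Open Scope ring_scope.

Lemma key {R : realFieldType} (d a b x0 x : R) :
  0 < d ->
  - (d^+2/4) <= a * x0 + b + x0^+2/2 <= d^+2/4 ->
  - (d^+2/4) <= a * (x0 + d) + b + (x0 + d)^+2/2 ->
  - (d^+2/4) <= a * (x0 - d) + b + (x0 - d)^+2/2 ->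
  (3 * d <= x - x0) || (x - x0 <= - (3 * d)) ->
  d^+2/4 <= a * x + b + x^+2/2.
Proof.
move=> d0 /andP[h1 h2] hp hm /orP[] ht.
- have hpl : - d <= a + x0 by nra.
  nra.
- have hpl : a + x0 <= d by nra.
  nra.
Qed.

Theorem mainTheorem15 (R : realType) (delta l r : R) (g : R -> R) (x0 : R) :
  0 < delta ->
  (forall x, l <= x <= r -> `|g x + x ^+ 2 / 2| <= delta ^+ 2 / 4) ->
  l + 3 * delta <= x0 <= r - 3 * delta ->
  concave_majorant `[l, r] g x0 =
  concave_majorant `[x0 - 3 * delta, x0 + 3 * delta] g x0.
Proof.
move=> d0 hg /andP[hl hr].
have hg' : forall x, l <= x <= r ->
    - (delta^+2/4) <= g x + x^+2/2 <= delta^+2/4.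
  by move=> x /hg; rewrite ler_norml.
rewrite /concave_majorant.
set S1 := [set y | _]; set S2 := [set y | _].
have T1 : S1 (- x0 * x0 + (x0^+2/2 + delta^+2/4)).
  exists (- x0), (x0^+2/2 + delta^+2/4); split => //.
  move=> x /=; rewrite in_itv /= => /hg' /andP[_ h]; have := sqr_ge0 (x - x0); nra.
have S12 : S1 `<=` S2.
  move=> y [a [b [H ->]]]; exists a, b; split => //.
  move=> x /=; rewrite !in_itv /= => /andP[h1 h2]; apply: H.
  by rewrite /= in_itv /=; apply/andP; split; lra.
have x0J : x0 \in `[l, r] by rewrite in_itv /=; apply/andP; split; lra.
have lb2 : lbound S2 (g x0).
  move=> y [a [b [H ->]]]; apply: H => /=; rewrite in_itv /=.
  by apply/andP; split; lra.
have lb1 : lbound S1 (g x0) by move=> y /S12 /lb2.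
have hl1 : has_lbound S1 by exists (g x0).
have hl2 : has_lbound S2 by exists (g x0).
apply/le_anti/andP; split; last first.
  by apply: lb_le_inf; [exists (- x0 * x0 + (x0^+2/2 + delta^+2/4)) | move=> y /S12 /(ge_inf hl2)].
apply: lb_le_inf; first by exists (- x0 * x0 + (x0^+2/2 + delta^+2/4)); apply: S12.
move=> y [a [b [H ->]]].
have Tle := ge_inf hl1 T1.
have [hy|hy] := leP (- x0 * x0 + (x0^+2/2 + delta^+2/4)) (a * x0 + b).
  exact: le_trans Tle hy.
suff Hm : S1 (a * x0 + b) by exact: ge_inf hl1 _ Hm.
exists a, b; split => //.
move=> x /=; rewrite in_itv /= => hx.
have [hJ|hJ] := boolP ((x0 - 3 * delta <= x) && (x <= x0 + 3 * delta)).
  by apply: H; rewrite /= in_itv.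
have hJ' : (3 * delta <= x - x0) || (x - x0 <= - (3 * delta)).
  move: hJ; rewrite negb_and -!ltNge => /orP[] h; apply/orP; [right|left]; lra.
have gJ : forall s, x0 - 3 * delta <= s <= x0 + 3 * delta ->
    - (delta^+2/4) <= a * s + b + s^+2/2.
  move=> s hs.
  have hsl : l <= s <= r by move: hs => /andP[? ?]; apply/andP; split; lra.
  have := H s; rewrite /= in_itv /= => /(_ hs) h.
  move: (hg' s hsl) => /andP[h1 _]; lra.
move: (hg' x hx) => /andP[_ h2].
have q : - (delta^+2/4) <= a * x0 + b + x0^+2/2 <= delta^+2/4.
  apply/andP; split; last lra.
  by apply: gJ; apply/andP; split; lra.
have qp : - (delta^+2/4) <= a * (x0 + delta) + b + (x0 + delta)^+2/2.
  by apply: gJ; apply/andP; split; lra.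
have qm : - (delta^+2/4) <= a * (x0 - delta) + b + (x0 - delta)^+2/2.
  by apply: gJ; apply/andP; split; lra.
have := @key R delta a b x0 x d0 q qp qm hJ'.
lra.
Qed.
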